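(* Let $i\in\{3',3'',4\}$ and let $\tau$ be a finite topology on a finite set $X$. Then there exists a finite topology $\tau'$ on $X$ such that $G_i(\tau)\cong G_i(\tau')$ and the height of $\tau'$ is at most $3$.
   Context: A finite topology on $X$ is a family of subsets (open sets) containing $\emptyset,X$ and closed under unions and intersections; complements of open sets are closed. $m_\tau(x)$ is the intersection of all open sets containing $x$. The height of $\tau$ is the largest $h$ such that there are distinct $v_1,\dots,v_h\in X$ with $m_\tau(v_1)\subseteq\cdots\subseteq m_\tau(v_h)$. For distinct $x,y$, let (a): exist closed $J$, open $U_J,U_y$ with $x\in J\subseteq U_J$, $y\in U_y$, $U_J\cap U_y=\emptyset$; (b): exist closed $K$, open $U_x,U_K$ with $x\in U_x$, $y\in K\subseteq U_K$, $U_x\cap U_K=\emptyset$. $x,y$ are $T_{3'}$-separated if (a) or (b), $T_{3''}$-separated if (a) and (b), $T_4$-separated if there exist closed $J\ni x$, $K\ni y$ and disjoint open $U_J\supseteq J$, $U_K\supseteq K$. $G_i(\tau)$ is the simple graph on $X$ where distinct $x,y$ are adjacent iff not $T_i$-separated. *)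

(* Defs.v *)
From mathcomp Require Import all_boot.
Set Implicit Arguments. Unset Strict Implicit. Unset Printing Implicit Defensive.

Section FiniteTopology.
Variable X : finType.

Definition is_topology (tau : {set {set X}}) : Prop :=
  [/\ set0 \in tau, setT \in tau &
      forall U V, U \in tau -> V \in tau -> (U :|: V \in tau) /\ (U :&: V \in tau)].

Definition is_open (tau : {set {set X}}) (U : {set X}) : Prop := U \in tau.
Definition is_closed (tau : {set {set X}}) (C : {set X}) : Prop := ~: C \in tau.

Definition mset (tau : {set {set X}}) (x : X) : {set X} :=
  \bigcap_(U in tau | x \in U) U.

Definition height_chain (tau : {set {set X}}) (s : seq X) : Prop :=
  uniq s /\ sorted (fun a b => mset tau a \subset mset tau b) s.

Definition height_le (tau : {set {set X}}) (h : nat) : Prop :=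
  forall s : seq X, height_chain tau s -> size s <= h.

Definition sep_a (tau : {set {set X}}) (x y : X) : Prop :=
  exists J UJ Uy : {set X},
    is_closed tau J /\ is_open tau UJ /\ is_open tau Uy /\
    x \in J /\ J \subset UJ /\ y \in Uy /\ UJ :&: Uy = set0.

Definition sep_b (tau : {set {set X}}) (x y : X) : Prop :=
  exists K Ux UK : {set X},
    is_closed tau K /\ is_open tau Ux /\ is_open tau UK /\
    x \in Ux /\ y \in K /\ K \subset UK /\ Ux :&: UK = set0.

Definition T3'_sep (tau : {set {set X}}) (x y : X) : Prop := sep_a tau x y \/ sep_b tau x y.
Definition T3''_sep (tau : {set {set X}}) (x y : X) : Prop := sep_a tau x y /\ sep_b tau x y.
Definition T4_sep (tau : {set {set X}}) (x y : X) : Prop :=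
  exists J K UJ UK : {set X},
    is_closed tau J /\ is_closed tau K /\ is_open tau UJ /\ is_open tau UK /\
    x \in J /\ y \in K /\ J \subset UJ /\ K \subset UK /\ UJ :&: UK = set0.
End FiniteTopology.

Inductive sep_kind := T3' | T3'' | T4.

Definition separated (i : sep_kind) (X : finType) (tau : {set {set X}}) (x y : X) : Prop :=
  match i with
  | T3' => T3'_sep tau x y
  | T3'' => T3''_sep tau x y
  | T4 => T4_sep tau x y
  end.

Definition G_adj (i : sep_kind) (X : finType) (tau : {set {set X}}) (x y : X) : Prop :=
  x <> y /\ ~ separated i tau x y.

Definition graph_iso (X : finType) (e1 e2 : X -> X -> Prop) : Prop :=
  exists f : X -> X, bijective f /\ forall x y, e1 x y <-> e2 (f x) (f y).

(* Submission.v *)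
Require Import Defs.
From mathcomp Require Import all_boot.
Set Implicit Arguments. Unset Strict Implicit.

Section Gen.
Variable X : finType.
Variable tau : {set {set X}}.
Hypothesis Htop : is_topology tau.

Definition ole (a b : X) : bool := a \in mset tau b.

Lemma mset_open x : mset tau x \in tau.
Proof.
case: Htop => H0 HT HUI. rewrite /mset.
apply: (big_ind (fun S => S \in tau)) => //.
- by move=> A B HA HB; exact: (HUI _ _ HA HB).2.
- by move=> U /andP[].
Qed.

Lemma le_refl x : ole x x.
Proof. by apply/bigcapP => U /andP[]. Qed.

Lemma mset_min (U : {set X}) x : U \in tau -> x \in U -> mset tau x \subset U.
Proof. move=> HU Hx; apply/subsetP => a /bigcapP; apply; by rewrite HU Hx. Qed.

Lemma le_trans a b c : ole a b -> ole b c -> ole a c.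
Proof. rewrite /ole => Hab Hbc. have H := mset_min (mset_open c) Hbc. exact: (subsetP H a Hab). Qed.

Lemma open_down (U : {set X}) a b : U \in tau -> ole a b -> b \in U -> a \in U.
Proof. move=> HU Hab Hb; exact: (subsetP (mset_min HU Hb) a Hab). Qed.

Lemma down_open (U : {set X}) : (forall a b, ole a b -> b \in U -> a \in U) -> U \in tau.
Proof.
move=> HU. case: Htop => H0 HT HUI.
have -> : U = \bigcup_(b in U) mset tau b.
  apply/setP => a; apply/idP/bigcupP.
  - move=> Ha; exists a => //; exact: le_refl.
  - by move=> [b Hb Hab]; exact: HU Hab Hb.
apply: (big_ind (fun S => S \in tau)) => //.
- by move=> A B HA HB; exact: (HUI _ _ HA HB).1.
- by move=> b _; exact: mset_open.
Qed.

Definition Pr (r : X -> X -> bool) x y := exists z w, [/\ r x z, r w z & r w y].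
Definition Qr (r : X -> X -> bool) x y :=
  exists z1 z2 w, [/\ r x z1, r w z1, r w z2 & r y z2].

Lemma closed_up (J : {set X}) x z : is_closed tau J -> x \in J -> ole x z -> z \in J.
Proof.
rewrite /is_closed => HJ HxJ Hxz. apply/negPn/negP => Hzn.
have : x \in ~: J by apply: (open_down HJ Hxz); rewrite inE.
by rewrite inE HxJ.
Qed.

Lemma up_closed x : is_closed tau [set z | ole x z].
Proof.
rewrite /is_closed; apply: down_open => a b Hab.
rewrite !inE => Hb; apply/negP => Hxa; move/negP: Hb; apply; exact: le_trans Hxa Hab.
Qed.

Lemma dup_open x : [set a | [exists z, ole x z && ole a z]] \in tau.
Proof.
apply: down_open => a b Hab; rewrite !inE => /existsP [z /andP [H1 H2]].
apply/existsP; exists z; rewrite H1 /=; exact: le_trans Hab H2.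
Qed.

Lemma up_sub x : [set z | ole x z] \subset [set a | [exists z, ole x z && ole a z]].
Proof.
apply/subsetP => z; rewrite !inE => Hxz; apply/existsP; exists z; by rewrite Hxz le_refl.
Qed.

Lemma sep_a_iff x y : sep_a tau x y <-> ~ Pr ole x y.
Proof.
split.
- move=> [J [UJ [Uy [HJ [HUJ [HUy [HxJ [HJUJ [HyU Hdis]]]]]]]]] [z [w [Hxz Hwz Hwy]]].
  have HzJ := closed_up HJ HxJ Hxz.
  have HwUJ : w \in UJ := open_down HUJ Hwz (subsetP HJUJ _ HzJ).
  have HwUy : w \in Uy := open_down HUy Hwy HyU.
  have : w \in UJ :&: Uy by rewrite inE HwUJ HwUy.
  by rewrite Hdis inE.
- move=> HnP. exists [set z | ole x z], [set a | [exists z, ole x z && ole a z]], (mset tau y).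
  split; first exact: up_closed.
  split; first exact: dup_open.
  split; first exact: mset_open.
  split; first by rewrite inE le_refl.
  split; first exact: up_sub.
  split; first exact: le_refl.
  apply/setP => a; rewrite !inE. apply/negP => /andP [/existsP [z /andP [H1 H2]] H3].
  apply: HnP; exists z, a; split => //.
Qed.

Lemma sep_b_iff x y : sep_b tau x y <-> sep_a tau y x.
Proof.
split.
- move=> [K [Ux [UK [H1 [H2 [H3 [H4 [H5 [H6 H7]]]]]]]]].
  exists K, UK, Ux; do 6 (split => //); by rewrite setIC.
- move=> [K [UK [Ux [H1 [H2 [H3 [H4 [H5 [H6 H7]]]]]]]]].
  exists K, Ux, UK; do 6 (split => //); by rewrite setIC.
Qed.

Lemma T4_iff x y : T4_sep tau x y <-> ~ Qr ole x y.
Proof.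
split.
- move=> [J [K [UJ [UK [HJ [HK [HUJ [HUK [HxJ [HyK [HJU [HKU Hdis]]]]]]]]]]]]
    [z1 [z2 [w [H1 H2 H3 H4]]]].
  have Hz1 := closed_up HJ HxJ H1.
  have Hz2 := closed_up HK HyK H4.
  have Hw1 : w \in UJ := open_down HUJ H2 (subsetP HJU _ Hz1).
  have Hw2 : w \in UK := open_down HUK H3 (subsetP HKU _ Hz2).
  have : w \in UJ :&: UK by rewrite inE Hw1 Hw2.
  by rewrite Hdis inE.
- move=> HnQ. exists [set z | ole x z], [set z | ole y z],
    [set a | [exists z, ole x z && ole a z]], [set a | [exists z, ole y z && ole a z]].
  do 2 (split; first exact: up_closed).
  do 2 (split; first exact: dup_open).
  do 2 (split; first by rewrite inE le_refl).
  do 2 (split; first exact: up_sub).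
  apply/setP => a; rewrite !inE.
  apply/negP => /andP [/existsP [z /andP [H1 H2]] /existsP [z' /andP [H3 H4]]].
  apply: HnQ; exists z, z', a; split => //.
Qed.

Definition Sep i (r : X -> X -> bool) x y : Prop :=
  match i with
  | T3' => ~ Pr r x y \/ ~ Pr r y x
  | T3'' => ~ Pr r x y /\ ~ Pr r y x
  | T4 => ~ Qr r x y
  end.

Lemma separated_iff i x y : separated i tau x y <-> Sep i ole x y.
Proof.
have := sep_a_iff x y; have := sep_a_iff y x; have := sep_b_iff x y.
have := T4_iff x y.
case: i => /=; rewrite /T3'_sep /T3''_sep; tauto.
Qed.

End Gen.

Section Constr.
Variable X : finType.
Variable tau : {set {set X}}.
Hypothesis Htop : is_topology tau.

Notation le := (ole tau).
Let le_refl := le_refl tau.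
Lemma ltr a b c : le a b -> le b c -> le a c. Proof. exact: le_trans. Qed.
Let mset_open := mset_open Htop.

Definition inR x := [forall a, le a x ==> (le x a && (enum_rank x <= enum_rank a)%N)].
Definition maxl m := [forall b, le m b ==> le b m].
Definition inTop m := ~~ inR m && maxl m.
Definition le' a b := [|| a == b, inR a && le a b | [&& ~~ inR a, ~~ inTop a, inTop b & le a b]].
Definition tau' := [set U : {set X} | [forall a, forall b, le' a b ==> (b \in U) ==> (a \in U)]].

Lemma le_mset a b : le a b -> mset tau a \subset mset tau b.
Proof. move=> H; exact: mset_min (mset_open b) H. Qed.

Lemma R_exists x : exists2 r, inR r & le r x.
Proof.
pose key r := #|mset tau r| * #|X| + enum_rank r.
case: (@arg_minnP _ x (fun r => le r x) key (le_refl x)) => r Hrx Hmin.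
exists r => //.
apply/forallP => a; apply/implyP => Har.
have Hax : le a x by exact: ltr Har Hrx.
have Hk := Hmin a Hax.
have Hsub := le_mset Har.
case Hra: (le r a) => /=.
- have Hsub2 := le_mset Hra.
  have Heq : mset tau r = mset tau a by apply/eqP; rewrite eqEsubset Hsub2 Hsub.
  move: Hk; rewrite /key Heq. by rewrite leq_add2l.
- exfalso.
  have Hpr : mset tau a \proper mset tau r.
    rewrite properE Hsub /=; apply/negP => Hs.
    by move: Hra; rewrite /ole (subsetP Hs r (le_refl r)).
  have Hc := proper_card Hpr.
  move: Hk; rewrite /key.
  have Hr1 := ltn_ord (enum_rank a).
  have : #|mset tau a| * #|X| + enum_rank a < #|mset tau r| * #|X|.
    apply: (@leq_trans ((#|mset tau a|).+1 * #|X|)).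
      by rewrite mulSn addnC ltn_add2r.
    by rewrite leq_mul2r Hc orbT.
  move=> H1 H2.
  have := leq_ltn_trans H2 H1. by rewrite ltnNge leq_addr.
Qed.

Lemma max_exists z : exists2 m, maxl m & le z m.
Proof.
case: (@arg_maxnP _ z (fun m => le z m) (fun m => #|mset tau m|) (le_refl z)) => m Hzm Hmax.
exists m => //.
apply/forallP => b; apply/implyP => Hmb.
have Hk := Hmax b (ltr Hzm Hmb).
have Hsub := le_mset Hmb.
have Heq : mset tau m = mset tau b by apply/eqP; rewrite eqEcard Hsub; exact: Hk.
by rewrite /ole Heq; exact: le_refl.
Qed.

Lemma R_min r a : inR r -> le a r -> le r a.
Proof. by move=> /forallP /(_ a) /implyP H /H /andP []. Qed.

Lemma R_uniq r s : inR r -> inR s -> le r s -> r = s.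
Proof.
move=> Hr Hs Hrs.
move/forallP: (Hs) => /(_ r) /implyP /(_ Hrs) /andP [Hsr H1].
move/forallP: (Hr) => /(_ s) /implyP /(_ Hsr) /andP [_ H2].
apply: enum_rank_inj; apply: val_inj => /=. apply/eqP; by rewrite eqn_leq H1 H2.
Qed.

Lemma le'_le a b : le' a b -> le a b.
Proof.
rewrite /le' => /or3P [/eqP -> | /andP [] // | /and4P [] //]; exact: le_refl.
Qed.

Lemma le'_refl a : le' a a.
Proof. by rewrite /le' eqxx. Qed.

Lemma le'_trans a b c : le' a b -> le' b c -> le' a c.
Proof.
rewrite /le' => /or3P [/eqP -> // | /andP [Ha Hab] | /and4P [Ha Ha2 Hb Hab]].
- move=> /or3P [/eqP <- | /andP [Hb Hbc] | /and4P [Hb Hb2 Hc Hbc]].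
  + by rewrite Ha Hab orbT.
  + by rewrite Ha (ltr Hab Hbc) orbT.
  + by rewrite Ha (ltr Hab Hbc) orbT.
- move=> /or3P [/eqP <- | /andP [Hb' _] | /and4P [_ Hb2 _ _]].
  + by rewrite Ha Ha2 Hb Hab !orbT.
  + by move: Hb; rewrite /inTop Hb'.
  + by rewrite Hb in Hb2.
Qed.

Lemma tau'_top : is_topology tau'.
Proof.
split.
- rewrite inE; apply/forallP => a; apply/forallP => b; by rewrite !inE /= implybT.
- rewrite inE; apply/forallP => a; apply/forallP => b; by rewrite !inE !implybT.
- move=> U V; rewrite !inE => /forallP HU /forallP HV.
  have H1 : forall a b, le' a b -> b \in U -> a \in U.
    by move=> a b Hab Hb; move: (HU a) => /forallP /(_ b); rewrite Hab Hb.
  have H2 : forall a b, le' a b -> b \in V -> a \in V.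
    by move=> a b Hab Hb; move: (HV a) => /forallP /(_ b); rewrite Hab Hb.
  split; apply/forallP => a; apply/forallP => b; apply/implyP => Hab; rewrite !inE.
  + apply/implyP; by move=> /orP [] H; [rewrite (H1 _ _ Hab H) | rewrite (H2 _ _ Hab H) orbT].
  + apply/implyP; by move=> /andP [] Hu Hv; rewrite (H1 _ _ Hab Hu) (H2 _ _ Hab Hv).
Qed.

Lemma le_tau' a b : ole tau' a b = le' a b.
Proof.
apply/bigcapP/idP.
- move=> H. have := H [set c | le' c b]. rewrite !inE le'_refl andbT. apply.
  apply/forallP => a0; apply/forallP => b0; rewrite !inE.
  apply/implyP => H1; apply/implyP => H2; exact: le'_trans H1 H2.
- move=> Hab U /andP [HU Hb]. move: HU; rewrite inE => /forallP /(_ a) /forallP /(_ b).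
  by rewrite Hab Hb.
Qed.

Lemma key_claim x w : inR w -> (exists z, le x z && le w z) -> exists z, le' x z && le' w z.
Proof.
move=> Hw [z /andP [Hxz Hwz]]. case: (max_exists z) => m Hm Hzm.
have Hxm := ltr Hxz Hzm; have Hwm := ltr Hwz Hzm.
case: (boolP (inR m || inTop x)) => [Hc | Hc].
- exists x; rewrite le'_refl /=.
  have Hmx : le m x.
    case/orP: Hc => [HmR | HxT]; first exact: R_min HmR Hxm.
    move: HxT; rewrite /inTop => /andP [_ /forallP /(_ m) /implyP]; apply; exact: Hxm.
  by rewrite /le' Hw (ltr Hwm Hmx) orbT.
- rewrite negb_or in Hc; case/andP: Hc => HmR HxT.
  have HmT : inTop m by rewrite /inTop HmR Hm.
  exists m; rewrite {2}/le' Hw Hwm orbT andbT.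
  case: (boolP (inR x)) => HxR; rewrite /le' HxR Hxm /=; first by rewrite orbT.
  by rewrite HxT HmT /= !orbT.
Qed.

Lemma Pr_le' x y : Pr le x y <-> Pr le' x y.
Proof.
split.
- move=> [z [w [H1 H2 H3]]]. case: (R_exists w) => r Hr Hrw.
  have [z' /andP [Hx' Hr']] : exists z', le' x z' && le' r z'.
    apply: key_claim Hr _. exists z; by rewrite H1 (ltr Hrw H2).
  exists z', r; split => //. by rewrite /le' Hr (ltr Hrw H3) orbT.
- move=> [z [w [H1 H2 H3]]]; exists z, w; split; exact: le'_le.
Qed.

Lemma Qr_le' x y : Qr le x y <-> Qr le' x y.
Proof.
split.
- move=> [z1 [z2 [w [H1 H2 H3 H4]]]]. case: (R_exists w) => r Hr Hrw.
  have [z1' /andP [Hx' Hr1]] : exists z', le' x z' && le' r z'.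
    apply: key_claim Hr _. exists z1; by rewrite H1 (ltr Hrw H2).
  have [z2' /andP [Hy' Hr2]] : exists z', le' y z' && le' r z'.
    apply: key_claim Hr _. exists z2; by rewrite H4 (ltr Hrw H3).
  exists z1', z2', r; split => //.
- move=> [z1 [z2 [w [H1 H2 H3 H4]]]]; exists z1, z2, w; split; exact: le'_le.
Qed.

Lemma Pr_ext (r1 r2 : X -> X -> bool) x y : (forall a b, r1 a b = r2 a b) -> Pr r1 x y <-> Pr r2 x y.
Proof.
move=> E; split => [] [z [w [H1 H2 H3]]]; exists z, w; split; by rewrite ?E // -E.
Qed.

Lemma Qr_ext (r1 r2 : X -> X -> bool) x y : (forall a b, r1 a b = r2 a b) -> Qr r1 x y <-> Qr r2 x y.
Proof.
move=> E; split => [] [z1 [z2 [w [H1 H2 H3 H4]]]]; exists z1, z2, w; split; by rewrite ?E // -E.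
Qed.

Lemma Sep_equiv i x y : Sep i le x y <-> Sep i (ole tau') x y.
Proof.
have := Pr_le' x y; have := Pr_le' y x; have := Qr_le' x y.
have := Pr_ext x y le_tau'; have := Pr_ext y x le_tau'; have := Qr_ext x y le_tau'.
case: i => /=; tauto.
Qed.

Definition rk a := if inR a then 0 else if inTop a then 2 else 1.

Lemma rk_lt a b : le' a b -> a != b -> rk a < rk b.
Proof.
rewrite /le' => /or3P [/eqP -> | /andP [Ha Hab] | /and4P [Ha Ha2 Hb Hab]] Hne.
- by rewrite eqxx in Hne.
- rewrite /rk Ha. case: (boolP (inR b)) => Hb.
  + by rewrite (R_uniq Ha Hb Hab) eqxx in Hne.
  + by case: (inTop b).
- rewrite /rk (negbTE Ha) (negbTE Ha2) Hb.
  by move: Hb; rewrite /inTop => /andP [/negbTE -> _].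
Qed.

Lemma path_rk s x : uniq (x :: s) ->
  path (fun a b => mset tau' a \subset mset tau' b) x s -> size s + rk x <= 2.
Proof.
elim: s x => [|y s IH] x /=.
- by move=> _ _; rewrite /rk; case: (inR x); case: (inTop x).
- move=> /andP [Hx Hu] /andP [Hxy Hp].
  have Hne : x != y by move: Hx; rewrite inE negb_or => /andP [].
  have Hle : le' x y by rewrite -le_tau'; exact: (subsetP Hxy x (Submission.le_refl tau' x)).
  have H1 := rk_lt Hle Hne. have H2 := IH y Hu Hp.
  rewrite addSn -addnS; exact: leq_trans (leq_add (leqnn _) H1) H2.
Qed.

Lemma height_tau' : height_le tau' 3.
Proof.
move=> [|x s] [Hu Hs] //=. have H := path_rk Hu Hs. rewrite ltnS. exact: leq_trans (leq_addr _ _) H.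
Qed.
End Constr.

Theorem lemma3p6 (i : sep_kind) (X : finType) (tau : {set {set X}}) :
  is_topology tau ->
  exists tau' : {set {set X}},
    [/\ is_topology tau', graph_iso (G_adj i tau) (G_adj i tau') & height_le tau' 3].
Proof.
move=> Htop. exists (tau' tau). split.
- exact: tau'_top.
- exists id; split; first by exists id.
  move=> x y; rewrite /G_adj.
  have := separated_iff Htop i x y; have := separated_iff (tau'_top tau) i x y.
  have := @Sep_equiv X tau Htop i x y. tauto.
- exact: height_tau'.
Qed.
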